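(* Let $\sigma\in\mathcal{OR}_n$, and let $\mathcal L,\mathcal R,\mathcal H,\mathcal J,\mathcal D$ denote Green's relations on the monoid $\mathcal{OR}_n$. Then (i) $\mathcal L(\sigma)=\{\tau\in\mathcal{OR}_n: I(\tau)=I(\sigma)\}$; (ii) $\mathcal R(\sigma)=\{\tau\in\mathcal{OR}_n: J(\tau)=J(\sigma)\}$; (iii) $\mathcal H(\sigma)=\{\tau\in\mathcal{OR}_n: I(\tau)=I(\sigma)\text{ and } J(\tau)=J(\sigma)\}$; (iv) $\mathcal J(\sigma)=\{\tau\in\mathcal{OR}_n:\mathrm{rk}(\tau)=\mathrm{rk}(\sigma), \text{ and } \mathrm{tp}(\tau)=\mathrm{tp}(\sigma)\text{ if }\mathrm{rk}(\sigma)=m\}$; (v) $\mathcal D(\sigma)=\mathcal J(\sigma)$.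
   Context: Let $m\ge 1$, $n=2m$, $\mathbf n=\{1,\dots,n\}$, $\theta(i)=n+1-i$, written $\bar i$. A proper subset $I\subset\mathbf n$ is admissible if $I\cap\theta(I)=\emptyset$; $\mathbf n$ and $\emptyset$ are also admissible. For an injective partial map $\sigma$ of $\mathbf n$, $I(\sigma)$ is its domain, $J(\sigma)$ its image, $\mathrm{rk}(\sigma)=|I(\sigma)|$; products are compositions of partial maps. $W=\{\sigma\in S_n:\sigma(\bar i)=\overline{\sigma(i)}\ \forall i\}$, $W'=\{\sigma\in W:|\sigma(\{1,\dots,m\})\cap\{m+1,\dots,n\}|\text{ even}\}$. An admissible $m$-subset is of type I if it contains an even number of elements $>m$, type II otherwise. $\mathcal{OR}_n$ consists of the injective partial maps $\sigma$ with: $\mathrm{rk}(\sigma)<m$ and $I(\sigma),J(\sigma)$ admissible; or $\mathrm{rk}(\sigma)=m$ and $I(\sigma),J(\sigma)$ admissible of the same type; or $\sigma\in W'$. For $\mathrm{rk}(\sigma)=m$, $\mathrm{tp}(\sigma)$ is the type of $I(\sigma)$. For a Green relation $\mathcal K$, $\mathcal K(\sigma)$ denotes the class of $\sigma$. *)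

(* Defs.v *)
(* Partial injective maps on {1..n}, n = 2m, modelled on 'I_n
   (element i+1 of the paper <-> ordinal i). *)
From mathcomp Require Import all_boot all_order.
Set Implicit Arguments. Unset Strict Implicit. Unset Printing Implicit Defensive.

Section OR.
Variable m : nat.
Local Notation n := (2 * m).

Definition ppmap := {ffun 'I_n -> option 'I_n}.

(* theta(i) = n+1-i  <->  rev_ord *)
Definition theta (i : 'I_n) : 'I_n := rev_ord i.

Definition pinj (f : ppmap) : bool :=
  [forall i, forall j, (f i != None) ==> (f i == f j) ==> (i == j)].

Definition dom (f : ppmap) : {set 'I_n} := [set i | f i != None].
Definition img (f : ppmap) : {set 'I_n} := [set j | [exists i, f i == Some j]].
Definition rk (f : ppmap) : nat := #|dom f|.

Definition pmul (f g : ppmap) : ppmap := [ffun i => obind (fun j => f j) (g i)].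

Definition admissible (A : {set 'I_n}) : bool :=
  (A == setT) || (A == set0) ||
  ((A \proper setT) && (A :&: (theta @: A) == set0)).

(* elements > m of the paper are the ordinals with value >= m *)
Definition upper (A : {set 'I_n}) : {set 'I_n} := [set i in A | m <= val i].

Definition typeI (A : {set 'I_n}) : bool := ~~ odd #|upper A|.

Definition inW (f : ppmap) : bool :=
  pinj f && [forall i, f i != None] &&
  [forall i, f (theta i) == omap theta (f i)].

Definition inW' (f : ppmap) : bool :=
  inW f &&
  ~~ odd #|[set j | [exists i, (val i < m) && (f i == Some j)] & m <= val j]|.

Definition inOR (f : ppmap) : bool :=
  pinj f &&
  [|| (rk f < m) && admissible (dom f) && admissible (img f),
      [&& rk f == m, admissible (dom f), admissible (img f)
        & typeI (dom f) == typeI (img f)]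
    | inW' f].

Definition tp (f : ppmap) : bool := typeI (dom f).

Definition greenL (s t : ppmap) : Prop :=
  (exists2 a, inOR a & t = pmul a s) /\ (exists2 b, inOR b & s = pmul b t).
Definition greenR (s t : ppmap) : Prop :=
  (exists2 a, inOR a & t = pmul s a) /\ (exists2 b, inOR b & s = pmul t b).
Definition greenH (s t : ppmap) : Prop := greenL s t /\ greenR s t.
Definition greenJ (s t : ppmap) : Prop :=
  (exists a b, [/\ inOR a, inOR b & t = pmul (pmul a s) b]) /\
  (exists c d, [/\ inOR c, inOR d & s = pmul (pmul c t) d]).
Definition greenD (s t : ppmap) : Prop :=
  exists2 r, inOR r & greenL s r /\ greenR r t.

End OR.

(* Main.v *)
Require Import Defs.
From mathcomp Require Import all_boot all_order.
From mathcomp Require Import zify.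
Set Implicit Arguments. Unset Strict Implicit. Unset Printing Implicit Defensive.

Section Aux.
Variable m : nat.
Hypothesis hm : 0 < m.
Local Notation n := (2 * m).
Local Notation T := 'I_n.
Local Notation th := (@theta m).

Definition U : {set T} := [set i : T | m <= val i].
Definition L : {set T} := ~: U.
Definition half (A : {set T}) := th @: A = ~: A.

Lemma thK : involutive th.
Proof. by move=> i; rewrite /theta rev_ordK. Qed.
Lemma th_inj : injective th.
Proof. exact: inv_inj thK. Qed.

Lemma thE (A : {set T}) : th @: A = [set i | th i \in A].
Proof.
apply/setP=> i; rewrite inE; apply/imsetP/idP.
  by case=> x xA ->; rewrite thK.
by move=> h; exists (th i); rewrite ?thK.
Qed.

Lemma card_th (A : {set T}) : #|th @: A| = #|A|.
Proof. by rewrite card_imset //; exact: th_inj. Qed.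

Lemma thI (A B : {set T}) : th @: (A :&: B) = th @: A :&: th @: B.
Proof. by apply: imsetI => x y _ _; exact: th_inj. Qed.

Lemma thU : th @: U = L.
Proof.
apply/setP=> i; rewrite thE !inE /theta /=; case: i => i Hi /=. lia.
Qed.
Lemma thL : th @: L = U.
Proof. by rewrite -thU -imset_comp (eq_imset _ thK) imset_id. Qed.

Lemma thC (A : {set T}) : th @: (~: A) = ~: (th @: A).
Proof. by apply/setP=> i; rewrite !thE !inE. Qed.

Lemma halfL : half L.
Proof. by rewrite /half thL /L setCK. Qed.

Lemma cardD3 (A B : {set T}) : #|A| = #|A :&: B| + #|A :&: ~: B|.
Proof. by rewrite -setDE cardsID. Qed.

Lemma half_parity (A P : {set T}) : half A -> half P ->
  odd #|A :&: P| = odd #|A :&: U| (+) odd #|L :&: P|.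
Proof.
move=> hA hP.
have e1 : #|A :&: P| = #|L :&: (A :&: P)| + #|L :&: ~: A :&: ~: P|.
  rewrite (cardD3 (A :&: P) L) [A :&: P :&: L]setIC; congr (_ + _).
  by rewrite -card_th !thI hA hP /L setCK thU setIC setIA.
have e2 : #|A :&: U| = #|L :&: ~: A|.
  by rewrite -card_th thI thU hA setIC.
have e3 : #|L :&: P| = #|L :&: (A :&: P)| + #|L :&: P :&: ~: A|.
  rewrite (cardD3 _ A); congr (_ + _); apply: eq_card => y; rewrite !(in_setI, in_setC); by case: (y \in A); case: (y \in P); case: (y \in U).
have e4 : #|L :&: ~: A| = #|L :&: ~: A :&: P| + #|L :&: ~: A :&: ~: P|.
  by rewrite (cardD3 _ P).
have e5 : L :&: ~: A :&: P = L :&: P :&: ~: A.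
  by apply/setP=> y; rewrite !(in_setI, in_setC); case: (y \in A); case: (y \in P); case: (y \in U).
rewrite e1 e2 e3 e4 e5.
rewrite !oddD; case: (odd _); case: (odd _); case: (odd _) => //.
Qed.

Lemma in_thU i : (th i \in U) = (i \in L).
Proof. by rewrite -thU thE !inE. Qed.

Definition Ncnt (F : T -> T) := #|F @: L :&: U|.

Section Fun.
Variable F : T -> T.
Hypothesis injF : injective F.
Hypothesis cF : forall i, F (th i) = th (F i).

Lemma imsetC_inj (A : {set T}) : F @: (~: A) = ~: (F @: A).
Proof.
apply/setP=> y; rewrite [in RHS]inE; apply/imsetP/idP.
  case=> x xA ->; apply/imsetP => -[z zA /injF ezx]; by move: xA; rewrite inE ezx zA.
move=> /negP hy; exists (invF injF y); last by rewrite f_invF.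
rewrite inE; apply/negP=> h; apply: hy; apply/imsetP; exists (invF injF y) => //.
by rewrite f_invF.
Qed.

Lemma imset_th (A : {set T}) : th @: (F @: A) = F @: (th @: A).
Proof. by rewrite -!imset_comp; apply: eq_imset => x /=; rewrite cF. Qed.

Lemma half_img A : half A -> half (F @: A).
Proof. by rewrite /half imset_th => ->; rewrite imsetC_inj. Qed.

Lemma key A : half A -> odd #|F @: A :&: U| = odd #|A :&: U| (+) odd (Ncnt F).
Proof.
move=> hA.
pose P := [set i | F i \in U].
have hP : half P.
  rewrite /half thE; apply/setP=> i; have := in_thU (F i).
  by rewrite !inE cF.
have eX (X : {set T}) : #|F @: X :&: U| = #|X :&: P|.
  suff -> : F @: X :&: U = F @: (X :&: P) by rewrite card_imset.
  apply/setP => y; apply/idP/imsetP.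
    rewrite inE => /andP[/imsetP[x xX ->] hx]; exists x => //.
    by rewrite inE xX inE hx.
  case=> x; rewrite inE => /andP[xX]; rewrite inE => hx ->.
  by rewrite inE hx imset_f.
by rewrite /Ncnt !eX half_parity // setIC.
Qed.
End Fun.

Lemma Ncomp F G : injective F -> (forall i, F (th i) = th (F i)) ->
  injective G -> (forall i, G (th i) = th (G i)) ->
  odd (Ncnt (F \o G)) = odd (Ncnt F) (+) odd (Ncnt G).
Proof.
move=> iF cF iG cG.
rewrite {1}/Ncnt imset_comp key //; last exact: half_img halfL.
by rewrite addbC.
Qed.
End Aux.
Section PM.
Variable m : nat.
Hypothesis hm : 0 < m.
Local Notation n := (2 * m).
Local Notation T := 'I_n.
Local Notation th := (@theta m).
Local Notation pm := (ppmap m).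

Definition Fun (f : pm) (i : T) : T := odflt i (f i).

Lemma domE (f : pm) i : (i \in dom f) = (f i != None).
Proof. by rewrite inE. Qed.

Lemma imgP (f : pm) j : reflect (exists i, f i = Some j) (j \in img f).
Proof.
rewrite inE; apply: (iffP existsP) => -[i /eqP h]; by exists i.
Qed.

Lemma pinjP (f : pm) : reflect (forall i j k, f i = Some k -> f j = Some k -> i = j) (pinj f).
Proof.
apply: (iffP forallP) => h.
  move=> i j k hi hj; have /forallP/(_ j) := h i.
  by rewrite hi hj eqxx /= => /eqP.
move=> i; apply/forallP=> j; apply/implyP=> hi; apply/implyP=> /eqP e; apply/eqP.
case ei: (f i) hi e => [k|] // _ e; apply: (h i j k ei).
by rewrite -e.
Qed.

Lemma FunE (f : pm) i : i \in dom f -> f i = Some (Fun f i).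
Proof. by rewrite domE /Fun; case: (f i). Qed.

Lemma card_img (f : pm) : pinj f -> #|img f| = #|dom f|.
Proof.
move=> /pinjP hf.
have -> : img f = Fun f @: dom f.
  apply/setP=> j; apply/imgP/imsetP.
    case=> i hi; exists i; first by rewrite domE hi.
    by rewrite /Fun hi.
  by case=> i hi ->; exists i; rewrite -FunE.
apply: card_in_imset => i j hi hj e.
by apply: (hf i j (Fun f i)); [exact: FunE | rewrite e; exact: FunE].
Qed.

Lemma pmulE (f g : pm) i : pmul f g i = obind f (g i).
Proof. by rewrite ffunE. Qed.

Lemma pmulA (f g h : pm) : pmul (pmul f g) h = pmul f (pmul g h).
Proof. by apply/ffunP=> i; rewrite !pmulE; case: (h i) => //= k; rewrite pmulE. Qed.

Lemma dom_pmul (f g : pm) i : i \in dom (pmul f g) ->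
  exists k, g i = Some k /\ k \in dom f.
Proof.
rewrite domE pmulE; case: (g i) => [k|] //= h; exists k; split=> //.
by rewrite domE.
Qed.

Lemma dom_pmul_sub (f g : pm) : dom (pmul f g) \subset dom g.
Proof.
by apply/subsetP=> i /dom_pmul [k [h _]]; rewrite domE h.
Qed.

Lemma img_pmul_sub (f g : pm) : img (pmul f g) \subset img f.
Proof.
apply/subsetP=> j /imgP [i]; rewrite pmulE; case: (g i) => [k|] //= h.
by apply/imgP; exists k.
Qed.

Lemma pinj_pmul (f g : pm) : pinj f -> pinj g -> pinj (pmul f g).
Proof.
move=> /pinjP hf /pinjP hg; apply/pinjP=> i j k.
rewrite !pmulE; case ei: (g i) => [x|] //=; case ej: (g j) => [y|] //= h1 h2.
have exy := hf _ _ _ h1 h2; subst y.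
exact: hg _ _ _ ei ej.
Qed.

Definition pinv (f : pm) : pm := [ffun j => [pick i | f i == Some j]].

Lemma pinv_some (f : pm) i j : pinj f -> (pinv f j = Some i) <-> (f i = Some j).
Proof.
move=> /pinjP hf; rewrite ffunE; case: pickP => [x /eqP hx|hn]; split => //.
- by case=> <-.
- by move=> h; congr Some; apply: (hf _ _ j).
- by move=> h; have := hn i; rewrite h eqxx.
Qed.

Lemma pinv_none (f : pm) j : (pinv f j = None) <-> (j \notin img f).
Proof.
rewrite ffunE; case: pickP => [x /eqP hx|hn]; split => //.
  by move/negP; case; apply/imgP; exists x.
by move=> _; apply/negP => /imgP [i hi]; have := hn i; rewrite hi eqxx.
Qed.

Lemma pinj_pinv (f : pm) : pinj (pinv f).
Proof.
apply/pinjP=> i j k; rewrite !ffunE.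
case: pickP => // x /eqP hx [<-]; case: pickP => // y /eqP hy [ey].
by move: hx; rewrite -ey hy => -[].
Qed.

Lemma Lcons (s t : pm) : pinj s -> pinj t -> dom t = dom s ->
  [/\ pinj (pmul t (pinv s)), dom (pmul t (pinv s)) = img s,
      img (pmul t (pinv s)) = img t & t = pmul (pmul t (pinv s)) s].
Proof.
move=> hs ht ed; split.
- exact: pinj_pmul (pinj_pinv s).
- apply/setP=> j; rewrite domE pmulE; apply/idP/idP.
    case e: (pinv s j) => [i|] //= _; apply/imgP; exists i.
    by apply/(pinv_some _ _ hs).
  move=> /imgP [i hi]; have := (proj2 (pinv_some i j hs) hi) => -> /=.
  by rewrite -domE ed domE hi.
- apply/setP=> k; apply/imgP/imgP => -[x].
    rewrite pmulE; case: (pinv s x) => [i|] //= h; by exists i.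
  move=> hx; have : x \in dom s by rewrite -ed domE hx.
  rewrite domE; case e: (s x) => [j|] // _; exists j.
  by rewrite pmulE (proj2 (pinv_some x j hs) e).
- apply/ffunP=> i; rewrite !pmulE; case e: (s i) => [j|] /=.
    by rewrite pmulE (proj2 (pinv_some i j hs) e).
  by apply/eqP; rewrite -[_ == _]negbK -domE ed domE e.
Qed.

Lemma Rcons (s t : pm) : pinj s -> pinj t -> img t = img s ->
  [/\ pinj (pmul (pinv s) t), dom (pmul (pinv s) t) = dom t,
      img (pmul (pinv s) t) = dom s & t = pmul s (pmul (pinv s) t)].
Proof.
move=> hs ht ed; split.
- exact: pinj_pmul (pinj_pinv s) ht.
- apply/setP=> i; rewrite !domE pmulE; case e: (t i) => [j|] //=.
  have : j \in img s by rewrite -ed; apply/imgP; exists i.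
  by case/imgP=> k hk; rewrite (proj2 (pinv_some k j hs) hk).
- apply/setP=> k; apply/imgP/idP => [[x]|].
    rewrite pmulE; case: (t x) => [j|] //= h; rewrite domE.
    by move/(pinv_some _ _ hs): h => ->.
  rewrite domE; case e: (s k) => [j|] // _.
  have : j \in img t by rewrite ed; apply/imgP; exists k.
  case/imgP=> x hx; exists x; rewrite pmulE hx /=.
  exact/(pinv_some _ _ hs).
- apply/ffunP=> i; rewrite !pmulE; case e: (t i) => [j|] //=.
  have : j \in img s by rewrite -ed; apply/imgP; exists i.
  by case/imgP=> k hk; rewrite (proj2 (pinv_some k j hs) hk) /= hk.
Qed.

End PM.
Section Main.
Variable m : nat.
Hypothesis hm : 0 < m.
Local Notation n := (2 * m).
Local Notation T := 'I_n.
Local Notation th := (@theta m).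
Local Notation pm := (ppmap m).

Lemma bij (A B : {set T}) : #|A| = #|B| ->
  exists f : pm, [/\ pinj f, dom f = A & img f = B].
Proof.
move=> eAB.
pose f : pm := [ffun i => if i \in A then Some (nth i (enum B) (index i (enum A))) else None].
have sAB : size (enum A) = size (enum B) by rewrite -!cardE.
have ltA i : i \in A -> index i (enum A) < size (enum B).
  by move=> iA; rewrite -sAB index_mem mem_enum.
exists f; split.
- apply/pinjP=> i j k; rewrite !ffunE.
  case iA: (i \in A) => //; case jA: (j \in A) => // -[<-] [].
  rewrite [nth i _ _](set_nth_default j) ?ltA // => /eqP.
  rewrite nth_uniq ?ltA ?enum_uniq // => /eqP e.
  have hi : nth i (enum A) (index i (enum A)) = i by rewrite nth_index ?mem_enum.
  have hj : nth i (enum A) (index j (enum A)) = j.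
    by rewrite (set_nth_default j) ?nth_index ?mem_enum // sAB ltA.
  by rewrite -hi -hj e.
- by apply/setP=> i; rewrite domE ffunE; case: (i \in A).
- apply/setP=> k; apply/imgP/idP.
    case=> i; rewrite ffunE; case iA: (i \in A) => // -[<-].
    by rewrite -mem_enum mem_nth // ltA.
  move=> kB.
  have kk : index k (enum B) < size (enum A) by rewrite sAB index_mem mem_enum.
  exists (nth k (enum A) (index k (enum B))).
  rewrite ffunE -mem_enum mem_nth //= index_uniq ?enum_uniq //.
  by rewrite (set_nth_default k) ?nth_index ?mem_enum // -sAB.
Qed.

Lemma img_Fun (f : pm) : img f = Fun f @: dom f.
Proof.
apply/setP=> j; apply/imgP/imsetP.
  case=> i hi; exists i; first by rewrite domE hi.
  by rewrite /Fun hi.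
by case=> i hi ->; exists i; rewrite -FunE.
Qed.

Lemma upperE (A : {set T}) : upper A = A :&: U m.
Proof. by apply/setP=> i; rewrite !inE. Qed.

Lemma cardT : #|[set: T]| = n.
Proof. by rewrite cardsT card_ord. Qed.

Lemma adm_half (A : {set T}) : admissible A -> #|A| = m -> half A.
Proof.
rewrite /admissible => /orP[/orP[/eqP->|/eqP->]|/andP[_ /eqP hA]] cA.
- by move: cA; rewrite cardT; lia.
- by move: cA; rewrite cards0; lia.
apply/eqP; rewrite eqEcard; apply/andP; split.
  apply/subsetP=> i hi; rewrite inE; apply/negP=> iA.
  have : i \in A :&: th @: A by rewrite inE iA hi.
  by rewrite hA inE.
by rewrite card_th cA cardsCs setCK card_ord cA mul2n -addnn addnK.
Qed.

Lemma inW_total (f : pm) : inW f -> forall i, f i = Some (Fun f i).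
Proof.
case/andP=> /andP[_ /forallP h] _ i; apply: FunE; rewrite domE; exact: h.
Qed.

Lemma inW_inj (f : pm) : inW f -> injective (Fun f).
Proof.
move=> hf i j e; have /andP[/andP[/pinjP hp _] _] := hf.
by apply: (hp i j (Fun f i)); [exact: inW_total | rewrite e; exact: inW_total].
Qed.

Lemma inW_comm (f : pm) : inW f -> forall i, Fun f (th i) = th (Fun f i).
Proof.
move=> hf i; have /andP[_ /forallP /(_ i) /eqP] := hf.
by rewrite !(inW_total hf) => -[].
Qed.

Lemma Ncnt_eq (F G : T -> T) : F =1 G -> Ncnt F = Ncnt G.
Proof. by move=> e; rewrite /Ncnt (eq_imset _ e). Qed.

Lemma inW'_set (f : pm) : inW f ->
  [set j | [exists i, (val i < m) && (f i == Some j)] & m <= val j]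
   = Fun f @: L m :&: U m.
Proof.
move=> hW.
apply/setP=> j; rewrite !inE; congr (_ && _); apply/existsP/imsetP.
  case=> i /andP[hi /eqP e]; exists i; first by rewrite !inE -ltnNge.
  by rewrite /Fun e.
case=> i; rewrite !inE -ltnNge => hi ->; exists i.
by rewrite hi (inW_total hW); apply/eqP.
Qed.

Lemma inW'E (f : pm) : inW' f -> inW f /\ ~~ odd (Ncnt (Fun f)).
Proof.
by case/andP=> hW hN; split=> //; move: hN; rewrite /Ncnt inW'_set.
Qed.

Lemma inW'I (f : pm) (F : T -> T) : (forall j, f j = Some (F j)) -> injective F ->
  (forall i, F (th i) = th (F i)) -> ~~ odd (Ncnt F) -> inW' f.
Proof.
move=> hf iF cF nF.
have eF : Fun f =1 F by move=> i; rewrite /Fun hf.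
have hW : inW f.
  apply/andP; split; first (apply/andP; split).
  - by apply/pinjP=> i j k; rewrite !hf => -[<-] [] /iF.
  - by apply/forallP=> i; rewrite hf.
  - by apply/forallP=> i; rewrite !hf cF.
apply/andP; split=> //.
by rewrite inW'_set // -/(Ncnt (Fun f)) (Ncnt_eq eF).
Qed.
End Main.
Section Main2.
Variable m : nat.
Hypothesis hm : 0 < m.
Local Notation n := (2 * m).
Local Notation T := 'I_n.
Local Notation th := (@theta m).
Local Notation pm := (ppmap m).

Lemma inW_pinj (f : pm) : inW f -> pinj f.
Proof. by case/andP=> /andP[]. Qed.

Lemma inW_dom (f : pm) : inW f -> dom f = setT.
Proof. by move=> hf; apply/setP=> i; rewrite domE (inW_total hf) inE. Qed.

Lemma inW_img (f : pm) : inW f -> img f = setT.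
Proof.
move=> hf; apply/eqP; rewrite eqEcard subsetT /= card_img ?inW_pinj //.
by rewrite inW_dom.
Qed.

Lemma inW_rk (f : pm) : inW f -> rk f = n.
Proof. by move=> hf; rewrite /rk inW_dom // cardT. Qed.

Lemma invF_comm (S : T -> T) (iS : injective S) :
  (forall i, S (th i) = th (S i)) -> forall j, invF iS (th j) = th (invF iS j).
Proof. by move=> cS j; apply iS; rewrite f_invF cS f_invF. Qed.

Lemma pinv_W (s : pm) (hW : inW s) j : pinv s j = Some (invF (inW_inj hW) j).
Proof.
apply/(pinv_some _ _ (inW_pinj hW)).
by rewrite (inW_total hW) f_invF.
Qed.

Lemma W'_L (s t : pm) : inW' s -> inW' t -> inW' (pmul t (pinv s)).
Proof.
move=> /inW'E [hWs nS] /inW'E [hWt nT].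
have iG : injective (invF (inW_inj hWs)) by apply: (can_inj (f_invF (inW_inj hWs))).
have cG := invF_comm (inW_inj hWs) (inW_comm hWs).
apply: (inW'I (F := Fun t \o invF (inW_inj hWs))).
- by move=> j; rewrite pmulE pinv_W /= (inW_total hWt).
- exact: inj_comp (inW_inj hWt) iG.
- by move=> i /=; rewrite cG inW_comm.
have e : Fun t =1 (Fun t \o invF (inW_inj hWs)) \o Fun s by move=> i /=; rewrite invF_f.
move: nT; rewrite (Ncnt_eq e) Ncomp ?(negbTE nS).
- by rewrite addbF.
- exact: hm.
- exact: inj_comp (inW_inj hWt) iG.
- by move=> i /=; rewrite cG inW_comm.
- exact: inW_inj.
- exact: inW_comm.
Qed.

Lemma W'_R (s t : pm) : inW' s -> inW' t -> inW' (pmul (pinv s) t).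
Proof.
move=> /inW'E [hWs nS] /inW'E [hWt nT].
have iG : injective (invF (inW_inj hWs)) by apply: (can_inj (f_invF (inW_inj hWs))).
have cG := invF_comm (inW_inj hWs) (inW_comm hWs).
apply: (inW'I (F := invF (inW_inj hWs) \o Fun t)).
- by move=> j; rewrite pmulE (inW_total hWt) /= pinv_W.
- exact: inj_comp iG (inW_inj hWt).
- by move=> i /=; rewrite inW_comm.
have e : Fun t =1 Fun s \o (invF (inW_inj hWs) \o Fun t) by move=> i /=; rewrite f_invF.
move: nT; rewrite (Ncnt_eq e) Ncomp ?(negbTE nS).
- by [].
- exact: hm.
- exact: inW_inj.
- exact: inW_comm.
- exact: inj_comp iG (inW_inj hWt).
- by move=> i /=; rewrite inW_comm.
Qed.

Lemma W'_type (b : pm) (A : {set T}) : inW' b -> admissible A -> #|A| = m ->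
  typeI (Fun b @: A) = typeI A.
Proof.
move=> /inW'E [hW nb] aA cA.
rewrite /typeI !upperE key ?(negbTE nb) ?addbF //.
- exact: inW_inj.
- exact: inW_comm.
- exact: adm_half.
Qed.

Lemma ORP (f : pm) : inOR f -> [/\ pinj f, admissible (dom f), admissible (img f),
   (rk f = m -> typeI (dom f) = typeI (img f)) & (m < rk f -> inW' f)].
Proof.
case/andP=> pf /or3P[/andP[/andP[hr ad] ai]|/and4P[/eqP hr ad ai /eqP ht]|hw].
- by split=> // h; exfalso; lia.
- by split=> // h; exfalso; lia.
have hW : inW f by case/andP: hw.
split=> //.
- by rewrite inW_dom // /admissible eqxx.
- by rewrite inW_img // /admissible eqxx.
- by rewrite inW_rk //; lia.
Qed.

Lemma ORI (f : pm) : pinj f -> admissible (dom f) -> admissible (img f) ->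
   (rk f = m -> typeI (dom f) = typeI (img f)) -> (m < rk f -> inW' f) -> inOR f.
Proof.
move=> pf ad ai ht hw; rewrite /inOR pf /=.
case: (ltngtP (rk f) m) => h.
- by rewrite ad ai.
- by rewrite hw ?orbT.
- by rewrite ad ai ht // eqxx orbT.
Qed.

End Main2.
Section Main3.
Variable m : nat.
Hypothesis hm : 0 < m.
Local Notation n := (2 * m).
Local Notation T := 'I_n.
Local Notation th := (@theta m).
Local Notation pm := (ppmap m).

Lemma Lhalf (s t : pm) : inOR s -> inOR t -> dom t = dom s ->
  exists2 a, inOR a & t = pmul a s.
Proof.
move=> hs ht ed.
have [ps ads ais tys ws] := ORP hm hs; have [pt adt ait tyt wt] := ORP hm ht.
have [pa da ia ea] := Lcons ps pt ed.
exists (pmul t (pinv s)) => //.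
have ra : rk (pmul t (pinv s)) = rk s by rewrite /rk da card_img.
have rt : rk t = rk s by rewrite /rk ed.
apply: ORI => //.
- by rewrite da.
- by rewrite ia.
- move=> h; have hs' : rk s = m by rewrite -ra.
  by rewrite da ia -(tys hs') -ed tyt // rt.
- move=> h; apply: (W'_L hm); [apply: ws | apply: wt]; by rewrite ?rt -ra.
Qed.

Lemma Rhalf (s t : pm) : inOR s -> inOR t -> img t = img s ->
  exists2 a, inOR a & t = pmul s a.
Proof.
move=> hs ht ei.
have [ps ads ais tys ws] := ORP hm hs; have [pt adt ait tyt wt] := ORP hm ht.
have [pa da ia ea] := Rcons ps pt ei.
exists (pmul (pinv s) t) => //.
have rt : rk t = rk s by rewrite /rk -!card_img // ei.
have ra : rk (pmul (pinv s) t) = rk s by rewrite /rk da -/(rk t) rt.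
apply: ORI => //.
- by rewrite da.
- by rewrite ia.
- move=> h; have hs' : rk s = m by rewrite -ra.
  by rewrite da ia tyt ?rt // ei tys.
- move=> h; apply: (W'_R hm); [apply: ws | apply: wt]; by rewrite ?rt -ra.
Qed.

Lemma L_iff (s t : pm) : inOR s -> inOR t -> greenL s t <-> dom t = dom s.
Proof.
move=> hs ht; split.
  case=> [[a _ ea] [b _ eb]]; apply/eqP; rewrite eqEsubset; apply/andP; split.
    by rewrite {1}ea; exact: dom_pmul_sub.
  by rewrite {1}eb; exact: dom_pmul_sub.
by move=> ed; split; apply: Lhalf.
Qed.

Lemma R_iff (s t : pm) : inOR s -> inOR t -> greenR s t <-> img t = img s.
Proof.
move=> hs ht; split.
  case=> [[a _ ea] [b _ eb]]; apply/eqP; rewrite eqEsubset; apply/andP; split.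
    by rewrite {1}ea; exact: img_pmul_sub.
  by rewrite {1}eb; exact: img_pmul_sub.
by move=> ed; split; apply: Rhalf.
Qed.

Lemma Jmap (a s b t : pm) : pinj b -> t = pmul (pmul a s) b ->
  Fun b @: dom t \subset dom s /\ #|Fun b @: dom t| = #|dom t|.
Proof.
move=> /pinjP pb et; split.
  apply/subsetP=> y /imsetP [x]; rewrite et => /dom_pmul [k [bx kd]] ->.
  by rewrite /Fun bx /=; exact: (subsetP (dom_pmul_sub a s) k kd).
apply: card_in_imset => i j; rewrite et => /(subsetP (dom_pmul_sub _ _)) hi
  /(subsetP (dom_pmul_sub _ _)) hj e.
by apply: (pb i j (Fun b i)); [exact: FunE | rewrite e; exact: FunE].
Qed.

Lemma JC (s t : pm) : inOR s -> inOR t -> greenJ s t ->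
  rk t = rk s /\ (rk s = m -> tp t = tp s).
Proof.
move=> hs ht [[a [b [ha hb et]]] [c [d [hc hd es]]]].
have [pb adb aib tyb wb] := ORP hm hb; have [pd _ _ _ _] := ORP hm hd.
have [sub1 c1] := Jmap pb et; have [sub2 c2] := Jmap pd es.
have rts : rk t = rk s.
  apply/eqP; rewrite eqn_leq /rk; apply/andP; split.
    by rewrite -c1; exact: subset_leq_card.
  by rewrite -c2; exact: subset_leq_card.
split=> // hsm.
have [_ adt _ _ _] := ORP hm ht.
have eY : Fun b @: dom t = dom s.
  by apply/eqP; rewrite eqEcard sub1 c1 -/(rk t) rts /=.
case: (ltnP m (rk b)) => hb'.
  by rewrite /tp -eY (W'_type hm) // ?wb // -/(rk t) rts.
have sdt : dom t \subset dom b by rewrite et; exact: dom_pmul_sub.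
have edb : dom b = dom t.
  apply/eqP; rewrite eq_sym eqEcard sdt /=.
  by rewrite -/(rk b) -/(rk t) rts hsm.
have eib : img b = dom s by rewrite img_Fun edb eY.
rewrite /tp -edb -eib tyb // /rk edb -/(rk t) rts //.
Qed.

Lemma CD (s t : pm) : inOR s -> inOR t -> rk t = rk s ->
  (rk s = m -> tp t = tp s) -> greenD s t.
Proof.
move=> hs ht rt tt.
have [ps ads ais tys ws] := ORP hm hs; have [pt adt ait tyt wt] := ORP hm ht.
case: (ltnP m (rk s)) => h.
  exists s => //; split; first by apply/L_iff.
  apply/R_iff => //.
  have [hWs _] := inW'E (ws h).
  have wt' : inW' t by apply: wt; rewrite rt.
  have [hWt _] := inW'E wt'.
  by rewrite !inW_img.
have cst : #|dom s| = #|img t| by rewrite card_img // -/(rk t) rt.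
have [r [pr dr ir]] := bij cst.
have hr : inOR r.
  apply: ORI => //.
  - by rewrite dr.
  - by rewrite ir.
  - move=> hr; have hs' : rk s = m by move: hr; rewrite /rk dr.
    have ht' : rk t = m by rewrite rt.
    by rewrite dr ir -(tyt ht') -/(tp t) (tt hs').
  - move=> hr; exfalso; move: hr h; rewrite /rk dr -/(rk s) => h1 h2.
    by have := leq_trans h1 h2; rewrite ltnn.
exists r => //; split; first by apply/L_iff.
by apply/R_iff.
Qed.

Lemma DJ (s t : pm) : greenD s t -> greenJ s t.
Proof.
case=> r hr [[[a ha ea] [b hb eb]] [[c hc ec] [d hd ed]]]; split.
  by exists a, c; split=> //; rewrite ec ea.
by exists b, d; split=> //; rewrite eb ed pmulA.
Qed.

End Main3.

Theorem proposition3p3 (m : nat) (hm : 0 < m) (s : ppmap m) (hs : inOR s) :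
  forall t : ppmap m, inOR t ->
  [/\ greenL s t <-> dom t = dom s,
      greenR s t <-> img t = img s,
      greenH s t <-> dom t = dom s /\ img t = img s,
      greenJ s t <-> rk t = rk s /\ (rk s = m -> tp t = tp s)
    & greenD s t <-> greenJ s t].
Proof.
move=> t ht.
have LI := L_iff hm hs ht; have RI := R_iff hm hs ht.
have JI := JC hm hs ht; have CI := CD hm hs ht.
split.
- exact: LI.
- exact: RI.
- rewrite /greenH; split.
    by case=> /LI ? /RI ?.
  by case=> ? ?; split; [apply/LI | apply/RI].
- split; first exact: JI.
  by case=> ? ?; apply: DJ; exact: CI.
- split; first exact: DJ.
  by move=> hJ; have [? ?] := JI hJ; exact: CI.
Qed.
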